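(* For any two $n$-dimensional simplices $\triangle,\triangle'\subset\mathbb{R}^n$, $$\#\operatorname{vert}(\triangle\cap\triangle')\le\binom{2n+2}{n+2}.$$
   Context: $\operatorname{vert}(X)$ denotes the vertex set of a polytope $X$. *)

(* Defs.v *)
From HB Require Import structures.
From mathcomp Require Import all_boot all_order all_algebra.
From mathcomp Require Import reals.
Set Implicit Arguments. Unset Strict Implicit. Unset Printing Implicit Defensive.
Import Order.TTheory GRing.Theory Num.Theory.
Local Open Scope ring_scope.

Definition conv_hull (R : realType) (n k : nat) (v : 'I_k -> 'rV[R]_n)
  (x : 'rV[R]_n) : Prop :=
  exists l : 'I_k -> R, (forall i, 0 <= l i) /\ \sum_i l i = 1 /\
    x = \sum_i l i *: v i.

Definition affinely_independent (R : realType) (n k : nat)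
  (v : 'I_k -> 'rV[R]_n) : Prop :=
  forall l : 'I_k -> R, \sum_i l i = 0 -> \sum_i l i *: v i = 0 ->
    forall i, l i = 0.

Definition is_simplex (R : realType) (n : nat) (S : 'rV[R]_n -> Prop) : Prop :=
  exists v : 'I_n.+1 -> 'rV[R]_n, affinely_independent v /\
    (forall x, S x <-> conv_hull v x).

Definition is_vertex (R : realType) (n : nat) (X : 'rV[R]_n -> Prop)
  (x : 'rV[R]_n) : Prop :=
  X x /\ forall (y z : 'rV[R]_n) (t : R), X y -> X z -> 0 < t < 1 ->
    x = t *: y + (1 - t) *: z -> y = z.

(* Main.v *)
Require Import Defs.
From HB Require Import structures.
From mathcomp Require Import all_boot all_order all_algebra.
From mathcomp Require Import reals.
From mathcomp Require Import ring lra zify.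
From Stdlib Require Import ClassicalEpsilon.
Import Order.TTheory GRing.Theory Num.Theory.
Local Open Scope ring_scope.
Set Implicit Arguments. Unset Strict Implicit. Unset Printing Implicit Defensive.

Section Main.
Variable R : realType.
Variable n : nat.
Variables v w : 'I_n.+1 -> 'rV[R]_n.
Local Notation J := ('I_n.+1 + 'I_n.+1)%type.
Definition p2 (a b : R) : 'rV[R]_2 := \row_(k < 2) (if k == ord0 then a else b).
Definition cv (j : J) : 'rV[R]_(2 + n) :=
  match j with inl i => row_mx (p2 1 0) (v i) | inr i => row_mx (p2 0 1) (- w i) end.

Lemma p2E a b k : p2 a b 0 k = if k == ord0 then a else b.
Proof. by rewrite mxE. Qed.

Lemma p2_inj a b c d : p2 a b = p2 c d -> a = c /\ b = d.
Proof.
move=> /rowP H; split; [have := H ord0 | have := H ord_max]; by rewrite !mxE.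
Qed.

Lemma scale_p2 c a b : c *: p2 a b = p2 (c * a) (c * b).
Proof. by apply/rowP => k; rewrite mxE !p2E; case: (k == ord0). Qed.
Lemma add_p2 a b c d : p2 a b + p2 c d = p2 (a + c) (b + d).
Proof. by apply/rowP => k; rewrite mxE !p2E; case: (k == ord0). Qed.
Lemma sum_p2 m (f g : 'I_m -> R) : \sum_i p2 (f i) (g i) = p2 (\sum_i f i) (\sum_i g i).
Proof.
apply/rowP => k; rewrite summxE !p2E; under eq_bigr do rewrite p2E.
by case: (k == ord0).
Qed.

Lemma sum_col (a : J -> R) : \sum_j a j *: cv j =
  row_mx (p2 (\sum_i a (inl i)) (\sum_i a (inr i)))
         (\sum_i a (inl i) *: v i - \sum_i a (inr i) *: w i).
Proof.
rewrite -[LHS]hsubmxK; congr row_mx.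
  rewrite linear_sum big_sumType /=.
  under eq_bigr do rewrite linearZ /= row_mxKl scale_p2.
  under [X in _ + X = _]eq_bigr do rewrite linearZ /= row_mxKl scale_p2.
  by rewrite !sum_p2 add_p2 -!big_distrl /= !mulr1 !mulr0 addr0 add0r.
rewrite linear_sum big_sumType /=.
under eq_bigr do rewrite linearZ /= row_mxKr.
under [X in _ + X = _]eq_bigr do rewrite linearZ /= row_mxKr.
by rewrite -sumrN; under [X in _ + X = _]eq_bigr do rewrite scalerN.
Qed.

Definition spanT (T : {set J}) := (\sum_(j in T) <<cv j>>)%MS.
Definition indep (T : {set J}) := forall a : J -> R,
  (forall j, j \notin T -> a j = 0) -> \sum_j a j *: cv j = 0 -> forall j, a j = 0.

Lemma sub_span (T : {set J}) (x : 'rV[R]_(2 + n)) : (x <= spanT T)%MS ->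
  exists a : J -> R, (forall j, j \notin T -> a j = 0) /\ x = \sum_j a j *: cv j.
Proof.
case/sub_sums_genmxP => u ->.
exists (fun j => if j \in T then u j 0 0 else 0); split.
  by move=> j /negPf ->.
rewrite big_mkcond; apply: eq_bigr => j _.
case: (j \in T); last by rewrite scale0r.
by rewrite {1}(mx11_scalar (u j)) mul_scalar_mx.
Qed.

Lemma span_sub (T : {set J}) (a : J -> R) : (forall j, j \notin T -> a j = 0) ->
  ((\sum_j a j *: cv j)%R <= spanT T)%MS.
Proof.
move=> H; apply: summx_sub => j _; case: (boolP (j \in T)) => jT.
  by apply: scalemx_sub; apply: (sumsmx_sup j) => //; rewrite genmxE.
by rewrite H // scale0r sub0mx.
Qed.

Lemma rank_span_le (T : {set J}) : (\rank (spanT T) <= #|T|)%N.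
Proof.
rewrite /spanT -sum1_card.
elim/big_rec2: _ => [|j k A _ IH]; first by rewrite mxrank0.
apply: leq_trans (mxrank_adds_leqif _ _).1 _.
by apply: leq_add => //; rewrite genmxE rank_leq_row.
Qed.


Lemma indep_sub (T T' : {set J}) : T' \subset T -> indep T -> indep T'.
Proof.
move=> sT iT a Ha Hs; apply: iT Hs => j jT; apply: Ha.
by apply: contra jT; apply: (subsetP sT).
Qed.

Lemma sum_delta (k : J) : \sum_j (j == k)%:R *: cv j = cv k.
Proof.
rewrite (bigD1 k) //= eqxx scale1r big1 ?addr0 // => j /negPf ->.
by rewrite scale0r.
Qed.

Lemma spanD1 (T : {set J}) k : k \in T -> spanT T = (<<cv k>> + spanT (T :\ k))%MS.
Proof.
move=> kT; rewrite /spanT (bigD1 k) //=; congr (_ + _)%MS.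
by apply: eq_bigl => j; rewrite in_setD1 andbC.
Qed.

Lemma indep_notin (T : {set J}) k : indep T -> k \in T -> ~~ (cv k <= spanT (T :\ k))%MS.
Proof.
move=> iT kT; apply/negP => /sub_span [a [Ha Hx]].
pose a' j := a j - (j == k)%:R.
have : a' k = 0.
  apply: iT => [j jT|].
    rewrite /a' Ha; last by rewrite in_setD1 negb_and jT orbT.
    have /negPf -> : j != k by apply: contraNneq jT => ->.
    by rewrite subr0.
  rewrite /a'; under eq_bigr do rewrite scalerBl.
  by rewrite sumrB sum_delta -Hx subrr.
rewrite /a' Ha ?eqxx ?sub0r; last by rewrite in_setD1 eqxx.
by move/eqP; rewrite oppr_eq0 oner_eq0.
Qed.

Lemma indep_rank (T : {set J}) : indep T -> \rank (spanT T) = #|T|.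
Proof.
have [m] := ubnP #|T|; elim: m T => // m IH T.
case: (set_0Vmem T) => [-> _ _|[k kT] HT iT].
  by rewrite /spanT big_set0 mxrank0 cards0.
have iT' : indep (T :\ k) by apply: indep_sub iT; apply: subsetDl.
have cT : #|T| = #|T :\ k|.+1 by rewrite (cardsD1 k T) kT.
have IH' := IH (T :\ k); rewrite -cT in IH'.
have := IH' HT iT' => {}IH'.
have Hlt : (spanT (T :\ k) < spanT T)%MS.
  rewrite ltmxE (spanD1 kT) addsmxSr /= addsmx_sub negb_and.
  by rewrite genmxE (indep_notin iT kT).
move: Hlt; rewrite ltmxErank => /andP [_].
rewrite IH' => H1; apply/eqP; rewrite eqn_leq rank_span_le /=.
by rewrite cT.
Qed.

Lemma indep_card (T : {set J}) : indep T -> (#|T| <= n.+2)%N.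
Proof. by move/indep_rank <-; apply: rank_leq_col. Qed.


Lemma indep_add (T : {set J}) j : indep T -> ~~ (cv j <= spanT T)%MS -> indep (j |: T).
Proof.
move=> iT nj a Ha Hs.
pose b i := if i == j then 0 else a i.
have Hb : \sum_i a i *: cv i = a j *: cv j + \sum_i b i *: cv i.
  rewrite (bigD1 j) //= [X in _ = _ + X](bigD1 j) //= {1}/b eqxx scale0r add0r.
  by congr (_ + _); apply: eq_bigr => i /negPf ij; rewrite /b ij.
have bT : forall i, i \notin T -> b i = 0.
  move=> i iT0; rewrite /b; case: eqP => // /eqP ij; apply: Ha.
  by rewrite in_setU1 negb_or ij.
have aj : a j = 0.
  apply/eqP; apply: contraNT nj => aj0.
  have -> : cv j = (- (a j)^-1) *: \sum_i b i *: cv i.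
    rewrite scaleNr -scalerN; apply: (scalerI aj0).
    rewrite scalerA mulfV // scale1r.
    by apply/eqP; rewrite -addr_eq0 -Hb Hs.
  by apply: scalemx_sub; apply: span_sub.
have bz : forall i, b i = 0.
  by apply: (iT b bT); move: Hs; rewrite Hb aj scale0r add0r.
by move=> i; have := bz i; rewrite /b; case: eqP => // ->.
Qed.

Lemma extend (G : {set J}) : indep G -> #|G| = n.+2 ->
  forall T : {set J}, indep T -> exists B : {set J}, [/\ T \subset B, indep B & #|B| = n.+2].
Proof.
move=> iG cG T; have [m] := ubnP (n.+2 - #|T|); elim: m T => // m IH T Hm iT.
have := indep_card iT; rewrite leq_eqVlt => /orP [/eqP cT|ltT].
  by exists T; split.
have [j Hj|Hall] := pickP (fun j => ~~ (cv j <= spanT T)%MS).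
  have jT : j \notin T.
    apply: contra Hj => jT; apply: (sumsmx_sup j) => //; by rewrite genmxE.
  have iT' := indep_add iT Hj.
  have Hm' : (n.+2 - #|(j |: T)| < m)%N.
    rewrite cardsU1 jT /=; move: Hm ltT; set t := #|T|; move=> Hm ltT; lia.
  have [B [sB iB cB]] := IH (j |: T) Hm' iT'.
  exists B; split => //; apply: subset_trans sB; apply: subsetUr.
exfalso.
have sGT : (spanT G <= spanT T)%MS.
  apply/sumsmx_subP => i _; rewrite genmxE; by have := Hall i => /= /negbFE.
have := mxrankS sGT; rewrite (indep_rank iG) cG => H.
have := leq_trans H (rank_span_le T); by rewrite leqNgt ltT.
Qed.


Lemma p2_00 : (0 : 'rV[R]_2) = p2 0 0.
Proof. by apply/rowP => k; rewrite p2E !mxE; case: (k == ord0). Qed.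

Lemma sum_col_eq (a : J -> R) r1 r2 (z : 'rV[R]_n) :
  \sum_j a j *: cv j = row_mx (p2 r1 r2) z ->
  [/\ \sum_i a (inl i) = r1, \sum_i a (inr i) = r2 &
      \sum_i a (inl i) *: v i - \sum_i a (inr i) *: w i = z].
Proof.
by rewrite sum_col => /eq_row_mx [/p2_inj [-> ->] ->].
Qed.

Lemma sum_col_eq0 (a : J -> R) : \sum_j a j *: cv j = 0 ->
  [/\ \sum_i a (inl i) = 0, \sum_i a (inr i) = 0 &
      \sum_i a (inl i) *: v i = \sum_i a (inr i) *: w i].
Proof.
move=> H; have := @sum_col_eq a 0 0 0; rewrite -p2_00 row_mx0 => /(_ H).
by case=> -> -> /eqP; rewrite subr_eq0 => /eqP ->.
Qed.

Hypotheses (hv : affinely_independent v) (hw : affinely_independent w).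

Definition Gset : {set J} := inr ord0 |: [set inl i | i : 'I_n.+1].

Lemma Gset_card : #|Gset| = n.+2.
Proof.
rewrite /Gset cardsU1 card_imset; last by move=> x y [].
have -> : (inr ord0 : J) \notin [set (inl i : J) | i : 'I_n.+1].
  by apply/negP => /imsetP [].
by rewrite card_ord.
Qed.

Lemma Gset_indep : indep Gset.
Proof.
move=> a Ha /sum_col_eq0 [s1 s2 s3].
have ar : forall i, a (inr i) = 0.
  have ar' : forall i, i != ord0 -> a (inr i) = 0.
    move=> i i0; apply: Ha; rewrite /Gset in_setU1 negb_or.
    apply/andP; split; first by apply: contra i0 => /eqP [->].
    by apply/negP => /imsetP [].
  have a0 : a (inr ord0) = 0.
    by rewrite -s2 (bigD1 ord0) //= big1 ?addr0 // => i; apply: ar'.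
  by move=> i; case: (eqVneq i ord0) => [->|]; [|apply: ar'].
have al : forall i, a (inl i) = 0.
  apply: hv => //; rewrite s3 big1 // => i _; by rewrite ar scale0r.
by case.
Qed.


Variables (S S' : 'rV[R]_n -> Prop).
Hypotheses (hS : forall x, S x <-> conv_hull v x) (hS' : forall x, S' x <-> conv_hull w x).

Definition b0 : 'rV[R]_(2 + n) := row_mx (p2 1 1) 0.
Definition good (x : 'rV[R]_n) (B : {set J}) := indep B /\ exists a : J -> R,
  [/\ forall j, j \notin B -> a j = 0, \sum_j a j *: cv j = b0 & x = \sum_i a (inl i) *: v i].

Lemma good_uniq x y (B : {set J}) : good x B -> good y B -> x = y.
Proof.
case=> iB [a [Ha Hs Hx]] [_ [a' [Ha' Hs' Hy]]].
have d : forall j, a j - a' j = 0.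
  apply: iB => [j jB|]; first by rewrite Ha ?Ha' ?subr0.
  under eq_bigr do rewrite scalerBl.
  by rewrite sumrB Hs Hs' subrr.
rewrite Hx Hy; apply: eq_bigr => i _.
by move/eqP: (d (inl i)); rewrite subr_eq0 => /eqP ->.
Qed.

Lemma vertex_good x : is_vertex (fun y => S y /\ S' y) x ->
  exists B : {set J}, #|B| = n.+2 /\ good x B.
Proof.
case=> [[/hS [l [l0 [l1 lx]]] /hS' [l' [l0' [l1' lx']]]] Hv].
pose a (j : J) := match j with inl i => l i | inr i => l' i end.
have a0 : forall j, 0 <= a j by case.
have aS : \sum_j a j *: cv j = b0.
  by rewrite sum_col /b0 /= l1 l1' -lx -lx' subrr.
pose T := [set j | a j != 0].
have iT : indep T.
  move=> c Hc /sum_col_eq0 [c1 c2 c3].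
  pose D := \sum_i c (inl i) *: v i.
  pose K := \sum_(j in T) `|c j| / a j.
  have K0 : 0 <= K by apply: sumr_ge0 => j _; apply: divr_ge0.
  pose e := (K + 1)^-1.
  have e0 : 0 < e by rewrite invr_gt0; lra.
  have ec : forall j, e * `|c j| <= a j.
    move=> j; case: (boolP (j \in T)) => jT.
    - have aj : 0 < a j by rewrite lt_def (a0 j) andbT; move: jT; rewrite inE.
      have : `|c j| / a j <= K.
        rewrite /K (bigD1 j) //= lerDl sumr_ge0 // => i _.
        by apply: divr_ge0.
      rewrite ler_pdivrMr // => H.
      rewrite /e mulrC ler_pdivrMr; last by lra.
      nra.
    - by rewrite Hc // normr0 mulr0; apply: a0.
  have Pys : forall sg : R, (sg = 1 \/ sg = -1) ->
      S (x + (sg * e) *: D) /\ S' (x + (sg * e) *: D).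
    move=> sg hsg.
    have nn : forall j, 0 <= a j + sg * e * c j.
      move=> j; have := ec j; have := a0 j; have := ler_norm (c j).
      have := ler_norm (- c j); rewrite normrN => h1 h2 h3 h4.
      by case: hsg => ->; nra.
    split.
    - apply/hS; exists (fun i => a (inl i) + sg * e * c (inl i)); split.
        by move=> i; apply: (nn (inl i)).
      split.
        by rewrite big_split /= -mulr_sumr c1 mulr0 addr0.
      under eq_bigr do rewrite scalerDl -scalerA.
      by rewrite big_split /= -scaler_sumr lx.
    - apply/hS'; exists (fun i => a (inr i) + sg * e * c (inr i)); split.
        by move=> i; apply: (nn (inr i)).
      split.
        by rewrite big_split /= -mulr_sumr c2 mulr0 addr0.
      under eq_bigr do rewrite scalerDl -scalerA.
      by rewrite big_split /= -scaler_sumr lx' /D c3.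
  have [Hp Hp'] := Pys 1 (or_introl erefl).
  have [Hm Hm'] := Pys (-1) (or_intror erefl).
  have hh : ((0 : R) < 1/2) && (1/2 < (1 : R)) by apply/andP; split; lra.
  have hx : x = 1/2 *: (x + (1 * e) *: D) + (1 - 1/2) *: (x + (-1 * e) *: D).
    have -> : (1 - 1/2 : R) = 1/2 by field.
    rewrite !scalerDr !scalerA addrACA -!scalerDl.
    have -> : (1/2 + 1/2 : R) = 1 by field.
    have -> : (1/2 * (1 * e) + 1/2 * (-1 * e) : R) = 0 by ring.
    by rewrite scale1r scale0r addr0.
  have := Hv _ _ (1/2) (conj Hp Hp') (conj Hm Hm') hh hx.
  move/addrI/eqP; rewrite -subr_eq0 -scalerBl scaler_eq0 => /orP [|/eqP D0].
    by move/eqP => h; exfalso; lra.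
  have cl : forall i, c (inl i) = 0 by apply: hv.
  have cr : forall i, c (inr i) = 0 by apply: hw; rewrite // -c3.
  by case.
have [B [sB iB cB]] := extend Gset_indep Gset_card iT.
exists B; split=> //; split=> //; exists a; split => //.
  move=> j jB; apply/eqP; apply: contraNT jB => aj; apply: (subsetP sB).
  by rewrite inE.
Qed.

End Main.

Theorem lemma5p3 (R : realType) (n : nat) (S S' : 'rV[R]_n -> Prop) :
  is_simplex S -> is_simplex S' ->
  forall s : seq 'rV[R]_n, uniq s ->
    (forall x, x \in s -> is_vertex (fun y => S y /\ S' y) x) ->
    (size s <= 'C(2 * n + 2, n + 2))%N.
Proof.
move=> [v [hv hSv]] [w [hw hSw]] s us Hs.
have H : forall x, exists B : {set ('I_n.+1 + 'I_n.+1)%type},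
    x \in s -> #|B| = n.+2 /\ good v w x B.
  move=> x; case: (boolP (x \in s)) => xs; last by exists set0.
  have [B [cB gB]] := vertex_good hv hw hSv hSw (Hs x xs).
  by exists B.
pose f x := proj1_sig (constructive_indefinite_description _ (H x)).
have Hf : forall x, x \in s -> #|f x| = n.+2 /\ good v w x (f x).
  by move=> x; apply: (proj2_sig (constructive_indefinite_description _ (H x))).
have inj : {in s &, injective f}.
  move=> x y xs ys e; have [_ gx] := Hf x xs; have [_ gy] := Hf y ys.
  by rewrite e in gx; apply: good_uniq gx gy.
have um : uniq (map f s) by rewrite map_inj_in_uniq.
rewrite -(size_map f) -(card_uniqP um).
have -> : (2 * n + 2 = #|{: 'I_n.+1 + 'I_n.+1}|)%N by rewrite card_sum !card_ord; lia.
rewrite addn2 -card_draws; apply: subset_leq_card; apply/subsetP => B /mapP [x xs ->].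
by rewrite inE (Hf x xs).1.
Qed.
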